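(* Let $(D,k,r)$ be an instance of the Rooted Maximum Leaf Outbranching problem such that $D$ is reduced (none of the reduction rules (0)–(3) below applies to $D$). If $D$ has a vertex of indegree at least $k$, then $D$ has an outbranching rooted at $r$ with at least $k$ leaves. Rules: (0) some vertex of $D$ is not reachable from $r$ by a directed path (then the instance is replaced by a trivially FALSE one); (1) $x$ is a cutvertex of $D$: delete $x$ and add an arc $(v,z)$ for every $v\in N^-(x)$ and $z\in N^+(x)\setminus\{v\}$; (2) $P$ is a bipath of length 4: contract two consecutive internal vertices of $P$; (3) $x$ is a vertex and some $y\in N^-(x)$ is such that $N^-(x)\setminus\{y\}$ cuts $y$ from $r$ (every directed path from $r$ to $y$ meets $N^-(x)\setminus\{y\}$): delete the arc $(y,x)$.
   Context: A rooted digraph is a loopless digraph $D$ with a distinguished vertex $r$ (the root) such that: there is no arc $(u,r)$ for any $u\in V(D)$; there is no arc $(x,y)$ with $x\neq r$ and $y$ an outneighbour of $r$; and $r$ has outdegree at least 2. $N^-(x)$, $N^+(x)$ are the in- and out-neighbourhoods of $x$. A cut of $D$ is a set $S\subseteq V(D)\setminus\{r\}$ such that some vertex $z\notin S$ is not the endpoint of any directed path starting at $r$ in $D-S$; a cutvertex is a cut of size 1. A sequence of distinct vertices $(x_1,\dots,x_l)$, $l\ge 3$, is a bipath of length $l-1$ if the set of arcs incident to $\{x_2,\dots,x_{l-1}\}$ is exactly $\{(x_i,x_{i+1}),(x_{i+1},x_i):1\le i\le l-1\}$. An outbranching of $D$ is a spanning subdigraph which is a directed tree rooted at $r$ with all arcs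 directed away from $r$; its leaves are its vertices of outdegree 0. The Rooted Maximum Leaf Outbranching problem asks whether $D$ has an outbranching rooted at $r$ with at least $k$ leaves. *)

(* Defs.v *)
From mathcomp Require Import all_boot.
Set Implicit Arguments. Unset Strict Implicit. Unset Printing Implicit Defensive.

Section Digraph.
Variables (T : finType) (a : rel T) (r : T).

Definition loopless : Prop := forall x, ~~ a x x.

Definition rooted : Prop :=
  [/\ loopless,
      forall u, ~~ a u r,
      forall x y, x != r -> a r y -> ~~ a x y
    & 2 <= #|[set y | a r y]|].

(* arcs of D - S (arcs entering S removed; r is the start of all paths) *)
Definition avoid_rel (S : {set T}) : rel T := [rel u v | a u v && (v \notin S)].

Definition reach_avoid (S : {set T}) (z : T) : bool := connect (avoid_rel S) r z.

Definition is_cut (S : {set T}) : Prop :=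
  r \notin S /\ exists z, z \notin S /\ ~~ reach_avoid S z.

Definition is_cutvertex (x : T) : Prop := is_cut [set x].

(* every directed path from r to y meets S *)
Definition cuts_from_root (S : {set T}) (y : T) : Prop :=
  (r \in S) \/ ~~ reach_avoid S y.

Definition inner (s : seq T) : seq T := take (size s - 2) (behead s).

Definition bipath (s : seq T) : Prop :=
  [/\ uniq s, 3 <= size s &
      forall u v, (a u v && ((u \in inner s) || (v \in inner s))) =
                  (((u, v) \in zip s (behead s)) || ((v, u) \in zip s (behead s)))].

Definition bipath_len (s : seq T) : nat := (size s).-1.

Definition inneighbours (x : T) : {set T} := [set u | a u x].

Definition rule0_applies : Prop := exists z, ~~ connect a r z.
Definition rule1_applies : Prop := exists x, is_cutvertex x.
Definition rule2_applies : Prop := exists s, bipath s /\ bipath_len s = 4.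
Definition rule3_applies : Prop :=
  exists x y, a y x /\ cuts_from_root (inneighbours x :\ y) y.

Definition reduced : Prop :=
  ~ rule0_applies /\ ~ rule1_applies /\ ~ rule2_applies /\ ~ rule3_applies.

Definition outbranching (b : rel T) : Prop :=
  [/\ subrel b a,
      #|[set u | b u r]| = 0,
      forall v, v != r -> #|[set u | b u v]| = 1
    & forall v, connect b r v].

Definition leaves (b : rel T) : {set T} := [set v | [forall w, ~~ b v w]].

Definition indegree (v : T) : nat := #|inneighbours v|.

End Digraph.

(* Main.v *)
Require Import Defs.
From mathcomp Require Import all_boot.

Lemma rank_ex (T : finType) (e : rel T) (r : T) :
  exists d : T -> nat, forall v, connect e r v -> v != r ->
    exists2 u, e u v && connect e r u & d u < d v.
Proof.
have Hex v : exists n, (~~ connect e r v) ||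
    [exists s : n.-tuple T, path e r s && (last r s == v)].
  case: (boolP (connect e r v)) => [/connectP [s Hp Hl] | _]; last by exists 0.
  exists (size s); apply/orP; right; apply/existsP; exists (in_tuple s).
  by rewrite /= Hp -Hl eqxx.
exists (fun v => ex_minn (Hex v)) => v Hc Hv.
case: ex_minnP => n /orP [|]; first by rewrite Hc.
move=> /existsP [[s Hsz] /= /andP [Hp /eqP Hl]] Hmin.
move: Hsz Hp Hl; case/lastP: s => [|s' w]; first by move=> _ _ /= Hl; rewrite Hl eqxx in Hv.
rewrite size_rcons rcons_path last_rcons => /eqP Hsz /andP [Hp He] Hw; subst w.
exists (last r s').
  by rewrite He; apply/connectP; exists s'.
case: ex_minnP => m _ Hm.
apply: leq_ltn_trans (Hm (size s') _) _; last by rewrite -Hsz.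
by apply/orP; right; apply/existsP; exists (in_tuple s'); rewrite /= Hp eqxx.
Qed.

Theorem lemma5 (T : finType) (a : rel T) (r : T) (k : nat) :
  rooted a r -> reduced a r ->
  (exists v, k <= indegree a v) ->
  exists b : rel T, outbranching a r b /\ k <= #|leaves b|.
Proof.
move=> _ [H0 [_ [_ H3]]] [x Hx].
have Hall v : connect a r v.
  by apply/negPn/negP => H; apply: H0; exists v.
pose Y := inneighbours a x.
pose e1 : rel T := fun u v => a u v && (u \notin Y).
pose R := [set v | connect e1 r v].
have HrY : r \in Y -> forall y, y \in Y -> y = r.
  move=> Hr y Hy; apply/eqP/negPn/negP => Hyr; apply: H3; exists x, y.
  split; first by move: Hy; rewrite inE.
  by left; rewrite in_setD1 Hr andbT eq_sym Hyr.
have HYR : {subset Y <= R}.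
  move=> y Hy; rewrite inE.
  have Hnc : ~ cuts_from_root a r (Y :\ y) y.
    by move=> Hc; apply: H3; exists x, y; split => //; move: Hy; rewrite inE.
  have Hr : r \notin Y :\ y by apply/negP => Hr; apply: Hnc; left.
  have /connectP [s Hp Hl] : reach_avoid a r (Y :\ y) y.
    by apply/negPn/negP => Hn; apply: Hnc; right.
  have Hgen : forall s u, path (avoid_rel a (Y :\ y)) u s -> y = last u s ->
      (u \notin Y) || (u == y) -> connect e1 r u -> connect e1 r y.
    elim => [|w s' IH] u /=; first by move=> _ -> _.
    move=> /andP [/andP [Hau Hw] Hp'] Hl' Hu Hcu.
    case/orP: Hu => Hu; last by rewrite -(eqP Hu).
    apply: (IH w) => //.
      by move: Hw; rewrite in_setD1 negb_and negbK orbC.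
    by apply: connect_trans Hcu (connect1 _); rewrite /e1 Hau Hu.
  apply: (Hgen s r Hp Hl) => //.
  by move: Hr; rewrite in_setD1 negb_and negbK orbC.
have [d1 Hd1] := @rank_ex _ e1 r.
have [d2 Hd2] := @rank_ex _ a r.
pose M := (\max_(w : T) d1 w).+1.
pose d v := if v \in R then d1 v else M + d2 v.
pose p v := if v == r then r else if v \in R then
   odflt r [pick u | e1 u v && connect e1 r u & d1 u < d1 v]
   else odflt r [pick u | a u v && connect a r u & d2 u < d2 v].
have Hp v : v != r -> [/\ a (p v) v, d (p v) < d v & (v \in R -> (p v \in R) && (p v \notin Y))].
  move=> Hv; rewrite /p (negbTE Hv).
  case: (boolP (v \in R)) => HvR.
    case: pickP => [u /andP [/andP [/andP [Ha HuY] Hcu] Hlt] | Hn] /=.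
      have HuR : u \in R by rewrite inE.
      by rewrite /d HuR HvR Ha Hlt HuY.
    have [u Hu Hlt] := Hd1 v ltac:(by rewrite inE in HvR) Hv.
    by move: (Hn u); rewrite Hu Hlt.
  case: pickP => [u /andP [/andP [Ha Hcu] Hlt] | Hn] /=.
    split => //.
    rewrite /d (negbTE HvR).
    case: (u \in R); last by rewrite ltn_add2l.
    apply: leq_trans (leq_addr _ _).
    by rewrite /M ltnS; exact: leq_bigmax.
  have [u Hu Hlt] := Hd2 v (Hall v) Hv.
  by move: (Hn u); rewrite Hu Hlt.
pose b : rel T := [rel u v | (v != r) && (p v == u)].
exists b; split.
  split.
  - by move=> u v /andP [Hv /eqP <-]; case: (Hp v Hv).
  - by apply: eq_card0 => u; rewrite !inE /b /= eqxx.
  - move=> v Hv; rewrite (_ : [set u | b u v] = [set p v]) ?cards1 //; apply/setP => u.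
    by rewrite !inE /b /= Hv eq_sym.
  - move=> v; move: {2}(d v) (leqnn (d v)) => n; elim: n v => [|n IH] v Hn.
      case: (eqVneq v r) => [-> //|Hv]; case: (Hp v Hv) => _ Hlt _.
      by move: Hn; rewrite leqn0 => /eqP Hn; rewrite Hn in Hlt.
    case: (eqVneq v r) => [-> //|Hv]; case: (Hp v Hv) => _ Hlt _.
    apply: connect_trans (IH (p v) _) (connect1 _).
      by rewrite -ltnS; apply: leq_trans Hn.
    by rewrite /b /= Hv eqxx.
have Hconn u v : connect b u v -> exists i, iter i p v = u.
  move/connectP => [s Hs ->]; elim: s u Hs => [|w s IH] u /=; first by exists 0.
  move=> /andP [/andP [_ /eqP Hw] Hs]; have [i Hi] := IH w Hs.
  by exists i.+1; rewrite iterS Hi.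
have HpR v : v \in R -> p v \in R /\ (p v = r \/ p v \notin Y).
  move=> HvR; case: (eqVneq v r) => [->|Hv]; first by rewrite /p eqxx inE; split => //; left.
  by case: (Hp v Hv) => _ _ /(_ HvR) /andP [-> ->]; split => //; right.
have HiterR n v : v \in R -> 0 < n -> iter n p v \in R /\ (iter n p v = r \/ iter n p v \notin Y).
  move=> HvR; elim: n => [//|n IH] _.
  rewrite iterS; case: n IH => [_ | n IH]; first exact: HpR.
  by case: (IH isT) => H _; apply: HpR.
have Hinj y y' n : y \in Y -> y' \in Y -> iter n p y = y' -> y = y'.
  move=> Hy Hy' Hn; case: n Hn => [//|n] Hn.
  case: (HiterR n.+1 y (HYR _ Hy) isT) => _ [].
    by rewrite Hn => Hr; rewrite (HrY _ y Hy) ?(HrY _ y' Hy') // -Hr.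
  by rewrite Hn Hy'.
pose f y := [arg max_(w > y | connect b y w) d w].
have Hbd u v : b u v -> d u < d v.
  by move=> /andP [Hv /eqP <-]; case: (Hp v Hv).
have Hf y : connect b y (f y) /\ f y \in leaves b.
  rewrite /f; case: arg_maxnP => // l Hl Hmax; split => //.
  rewrite inE; apply/forallP => w; apply/negP => Hb.
  have := Hmax w (connect_trans Hl (connect1 Hb)).
  by rewrite /= leqNgt Hbd.
apply: leq_trans Hx _.
rewrite /indegree -/Y -(card_in_imset (f := f)).
  by apply: subset_leq_card; apply/subsetP => l /imsetP [y _ ->]; case: (Hf y).
move=> y y' Hy Hy' Hff.
have [i Hi] := Hconn _ _ (proj1 (Hf y)).
have [j Hj] := Hconn _ _ (proj1 (Hf y')).
rewrite Hff in Hi.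
case: (leqP i j) => Hij.
  apply: (Hinj y y' (j - i)) => //.
  by rewrite -Hi -iterD subnK.
symmetry; apply: (Hinj y' y (i - j)) => //.
by rewrite -Hj -iterD subnK // ltnW.
Qed.
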